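(* Let $\mathbb{R}^n$ and $\mathbb{R}^m$ be endowed with arbitrary norms (both denoted $\|\cdot\|$). Suppose $A\in\mathbb{R}^{m\times n}$ has at least two different columns and $f:\mathbb{R}^m\to\mathbb{R}\cup\{\infty\}$ is a differentiable convex function that is $L_f$-smooth and $\mu_f$-strongly convex on $\mathrm{conv}(A)$. Then \[ L_{f,A}\le L_f\cdot\max_{w\in\mathbb{R}^n\setminus\{0\},\ \langle\mathbf{1},w\rangle=0}\frac{\|Aw\|^2}{\|w\|^2},\qquad \mu_{f,A}\ge\frac{\mu_f\cdot\Phi(A)^2}{4\max_{i=1,\dots,n}\|e_i\|^2}, \] and in particular \[ \frac{L_{f,A}}{\mu_{f,A}}\le\frac{L_f}{\mu_f}\cdot\frac{4\max_{i}\|e_i\|^2}{\Phi(A)^2}\cdot\max_{w\in\mathbb{R}^n\setminus\{0\},\ \langle\mathbf{1},w\rangle=0}\frac{\|Aw\|^2}{\|w\|^2}. \]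
   Context: $\mathbf{1}$ is the all-ones vector and $e_i$ the standard basis vectors of $\mathbb{R}^n$. A differentiable convex $f$ is $L_f$-smooth ($L_f>0$) on $S\subseteq\mathrm{dom}(f)$ if $f(v)\le f(u)+\langle\nabla f(u),v-u\rangle+\frac{L_f}{2}\|v-u\|^2$ for all $u,v\in S$, and $\mu_f$-strongly convex ($\mu_f\ge0$) on $S$ if $f(v)\ge f(u)+\langle\nabla f(u),v-u\rangle+\frac{\mu_f}{2}\|v-u\|^2$ for all $u,v\in S$ (norm of $\mathbb{R}^m$). $\Delta_{n-1}=\{x\in\mathbb{R}^n_+:\sum_ix_i=1\}$; $A$ is identified with the set of its columns; $\mathrm{conv}(A)=\{Ax:x\in\Delta_{n-1}\}$; for $u\in\mathrm{conv}(A)$, $Z(u)=\{z\in\Delta_{n-1}:Az=u\}$ and $\mathrm{dist}(x,Z(u))=\min_{z\in Z(u)}\|x-z\|$ (norm of $\mathbb{R}^n$). The relative constants are \[ L_{f,A}=\sup_{u\in\mathrm{conv}(A),\,x\in\Delta_{n-1}\setminus Z(u)}\frac{2(f(Ax)-f(u)-\langle\nabla f(u),Ax-u\rangle)}{\mathrm{dist}(x,Z(u))^2}, \] and $\mu_{f,A}$ the same with $\inf$ instead of $\sup$. The facial distance is $\Phi(A)=\min\{\mathrm{dist}(F,\mathrm{conv}(A\setminus F)):F\text{ a face of }\mathrm{conv}(A),\ \emptyset\ne F\ne\mathrm{conv}(A)\}$, with $A\setminus F$ the columns of $A$ not in $F$ and $\mathrm{dist}(F,G)=\inf_{u\in F,w\in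 G}\|u-w\|$ (norm of $\mathbb{R}^m$). *)

(* Defs.v *)
From mathcomp Require Import all_boot all_order all_algebra.
From mathcomp Require Import all_classical all_reals all_analysis.
Set Implicit Arguments. Unset Strict Implicit. Unset Printing Implicit Defensive.
Import Order.TTheory GRing.Theory Num.Theory.
Import numFieldNormedType.Exports.
Local Open Scope classical_set_scope.
Local Open Scope ring_scope.

Section Defs.
Variable R : realType.

Definition is_norm (k : nat) (N : 'cV[R]_k -> R) : Prop :=
  [/\ (forall x, N x = 0 -> x = 0),
      (forall (a : R) x, N (a *: x) = `|a| * N x) &
      (forall x y, N (x + y) <= N x + N y)].

Definition cvx_set (k : nat) (S : set 'cV[R]_k) : Prop :=
  forall x y (t : R), S x -> S y -> 0 <= t <= 1 -> S (t *: x + (1 - t) *: y).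

Definition cvx_on (k : nat) (S : set 'cV[R]_k) (f : 'cV[R]_k -> R) : Prop :=
  forall x y (t : R), S x -> S y -> 0 <= t <= 1 ->
    f (t *: x + (1 - t) *: y) <= t * f x + (1 - t) * f y.

(* <grad f(u), v - u> written through the (Frechet) differential *)
Definition bregman (m : nat) (f : 'cV[R]_m -> R) (u v : 'cV[R]_m) : R :=
  f v - f u - 'd f u (v - u).

Definition smooth_on (m : nat) (Nm : 'cV[R]_m -> R) (f : 'cV[R]_m -> R)
  (S : set 'cV[R]_m) (L : R) : Prop :=
  forall u v, S u -> S v -> f v <= f u + 'd f u (v - u) + L / 2 * Nm (v - u) ^+ 2.

Definition strongly_convex_on (m : nat) (Nm : 'cV[R]_m -> R) (f : 'cV[R]_m -> R)
  (S : set 'cV[R]_m) (mu : R) : Prop :=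
  forall u v, S u -> S v -> f v >= f u + 'd f u (v - u) + mu / 2 * Nm (v - u) ^+ 2.

Definition simplex {n : nat} : set 'cV[R]_n :=
  [set x | (forall i, 0 <= x i 0) /\ \sum_(i < n) x i 0 = 1].

Definition convhullA (m n : nat) (A : 'M[R]_(m, n)) : set 'cV[R]_m :=
  [set A *m x | x in @simplex n].

Definition Zset (m n : nat) (A : 'M[R]_(m, n)) (u : 'cV[R]_m) : set 'cV[R]_n :=
  [set z | simplex z /\ A *m z = u].

(* dist(x, Z(u)) (the min is attained; inf = min) *)
Definition distZ (m n : nat) (Nn : 'cV[R]_n -> R) (A : 'M[R]_(m, n))
  (x : 'cV[R]_n) (u : 'cV[R]_m) : R :=
  inf [set r | exists z, Zset A u z /\ r = Nn (x - z)].

Definition LfA (m n : nat) (Nn : 'cV[R]_n -> R) (f : 'cV[R]_m -> R)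
  (A : 'M[R]_(m, n)) : \bar R :=
  ereal_sup [set r | exists u x, [/\ convhullA A u, simplex x, ~ Zset A u x &
     r = (2 * bregman f u (A *m x) / distZ Nn A x u ^+ 2)%:E]].

Definition muFA (m n : nat) (Nn : 'cV[R]_n -> R) (f : 'cV[R]_m -> R)
  (A : 'M[R]_(m, n)) : \bar R :=
  ereal_inf [set r | exists u x, [/\ convhullA A u, simplex x, ~ Zset A u x &
     r = (2 * bregman f u (A *m x) / distZ Nn A x u ^+ 2)%:E]].

Definition is_face (k : nat) (C F : set 'cV[R]_k) : Prop :=
  [/\ F `<=` C, cvx_set F &
     forall x y (t : R), C x -> C y -> 0 < t < 1 ->
       F (t *: x + (1 - t) *: y) -> F x /\ F y].

Definition convAminus (m n : nat) (A : 'M[R]_(m, n)) (F : set 'cV[R]_m) : set 'cV[R]_m :=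
  [set A *m x | x in [set x | simplex x /\ (forall j, F (matrix.col j A) -> x j 0 = 0)]].

Definition setdist (m : nat) (Nm : 'cV[R]_m -> R) (F G : set 'cV[R]_m) : R :=
  inf [set r | exists u w, [/\ F u, G w & r = Nm (u - w)]].

(* facial distance Phi(A) (finitely many faces; inf = min) *)
Definition facial_dist (m n : nat) (Nm : 'cV[R]_m -> R) (A : 'M[R]_(m, n)) : R :=
  inf [set r | exists F, [/\ is_face (convhullA A) F, F != set0, F != convhullA A &
     r = setdist Nm F (convAminus A F)]].

(* max_{w <> 0, <1,w> = 0} ||Aw||^2 / ||w||^2  (attained; sup = max) *)
Definition ratio_max (m n : nat) (Nm : 'cV[R]_m -> R) (Nn : 'cV[R]_n -> R)
  (A : 'M[R]_(m, n)) : R :=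
  sup [set r | exists w : 'cV[R]_n, [/\ w != 0, \sum_(i < n) w i 0 = 0 &
     r = Nm (A *m w) ^+ 2 / Nn w ^+ 2]].

Definition max_basis_sq (n : nat) (Nn : 'cV[R]_n -> R) : R :=
  \big[Num.max/0]_(i < n) (Nn (delta_mx i 0) ^+ 2).

End Defs.

(* Main.v *)
Require Import Defs.
From mathcomp Require Import all_boot all_order all_algebra.
From mathcomp Require Import all_classical all_reals all_analysis.
From mathcomp Require Import ring lra.
Import Order.TTheory GRing.Theory Num.Theory.
Import numFieldNormedType.Exports.
Local Open Scope classical_set_scope.
Local Open Scope ring_scope.
Set Implicit Arguments. Unset Strict Implicit. Unset Printing Implicit Defensive.


Lemma nrm0 (R : realType) k (N : 'cV[R]_k -> R) : is_norm N -> N 0 = 0.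
Proof. by case=> _ hZ _; rewrite -(scale0r 0) hZ normr0 mul0r. Qed.

Lemma nrmN (R : realType) k (N : 'cV[R]_k -> R) x : is_norm N -> N (- x) = N x.
Proof. by case=> _ hZ _; rewrite -scaleN1r hZ normrN normr1 mul1r. Qed.

Lemma nrm_ge0 (R : realType) k (N : 'cV[R]_k -> R) x : is_norm N -> 0 <= N x.
Proof.
move=> hN; have := hN => -[_ _ hT].
have := hT x (- x); rewrite subrr (nrm0 hN) (nrmN _ hN) -mulr2n.
by rewrite pmulrn_lge0.
Qed.

Lemma nrmB (R : realType) k (N : 'cV[R]_k -> R) x y : is_norm N -> N (x - y) = N (y - x).
Proof. by move=> hN; rewrite -(nrmN _ hN) opprB. Qed.

Lemma nrm_sum (R : realType) k (N : 'cV[R]_k -> R) (I : finType) (F : I -> 'cV[R]_k) :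
  is_norm N -> N (\sum_i F i) <= \sum_i N (F i).
Proof.
move=> hN; have := hN => -[_ _ hT].
elim/big_rec2: _ => [|i y1 y2 _ H]; first by rewrite (nrm0 hN).
by apply: le_trans (hT _ _) _; rewrite lerD2l.
Qed.

Lemma cV_decomp (R : realType) k (v : 'cV[R]_k) :
  v = \sum_i v i 0 *: delta_mx i 0.
Proof.
rewrite {1}[v]matrix_sum_delta; apply: eq_bigr => i _.
by rewrite big_ord1.
Qed.

Lemma mul_decomp (R : realType) m k (A : 'M[R]_(m, k)) (v : 'cV[R]_k) :
  A *m v = \sum_i v i 0 *: matrix.col i A.
Proof.
rewrite {1}[v]cV_decomp mulmx_sumr; apply: eq_bigr => i _.
by rewrite -scalemxAr colE.
Qed.

Lemma nrm_mul_le (R : realType) m k (N : 'cV[R]_m -> R) (A : 'M[R]_(m, k)) (v : 'cV[R]_k) :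
  is_norm N -> N (A *m v) <= \sum_i `|v i 0| * N (matrix.col i A).
Proof.
move=> hN; have := hN => -[_ hZ _].
rewrite mul_decomp; apply: le_trans (nrm_sum _ hN) _.
by apply: ler_sum => i _; rewrite hZ.
Qed.

Lemma nrm_le_l1 (R : realType) k (N : 'cV[R]_k -> R) (v : 'cV[R]_k) :
  is_norm N -> N v <= \sum_i `|v i 0| * N (delta_mx i 0).
Proof.
move=> hN; have := nrm_mul_le 1%:M v hN; rewrite mul1mx.
by congr (_ <= _); apply: eq_bigr => i _; rewrite colE mul1mx.
Qed.


Definition lipE (R : realType) k (g : 'cV[R]_k -> R) :=
  exists2 C : R, 0 <= C & forall (x y : 'cV[R]_k) (e : R), 0 <= e ->
    (forall i, `|x i 0 - y i 0| <= e) -> `|g x - g y| <= C * e.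

Lemma lip_cont_rV (R : realType) k (g : 'cV[R]_k -> R) :
  lipE g -> continuous (fun r : 'rV[R]_k => g r^T).
Proof.
case=> C C0 hC r; apply/(@cvgrPdist_lt _ _ _ _ (nbhs_filter r)) => eps eps0.
have C1 : 0 < C + 1 by rewrite ltr_wpDl.
have d0 : 0 < eps / (C + 1) by rewrite divr_gt0.
have Hn : \forall s \near r, forall i, `|r ord0 i - (s : 'rV[R]_k) ord0 i| < eps / (C + 1).
  by apply/nbhs_ballP; exists (eps / (C + 1)) => //= s [_ H] i; exact: H.
apply: filterS Hn => s Hs /=.
apply: le_lt_trans (hC _ _ (eps / (C + 1)) (ltW d0) _) _.
  by move=> i; rewrite !mxE; apply: ltW; rewrite (Hs i).
rewrite mulrA ltr_pdivrMr // mulrDr mulr1 mulrC ltrDl //.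
Qed.

Lemma EVT_cV (R : realType) k (h g : 'cV[R]_k -> R) (B : R) :
  lipE h -> lipE g -> (exists z, h z <= 0) ->
  (forall z, h z <= 0 -> forall i, `|z i 0| <= B) ->
  exists z, h z <= 0 /\ forall y, h y <= 0 -> g z <= g y.
Proof.
move=> hl gl [z0 hz0] hB.
pose K := [set r : 'rV[R]_k | h r^T <= 0].
have Kcl : closed K.
  have -> : K = (fun r : 'rV[R]_k => h r^T) @^-1` [set x | x <= 0] by [].
  apply: preimage_closed; last exact: closed_le.
  by move=> x _; apply: lip_cont_rV.
have Kb : bounded_set K.
  rewrite /bounded_set /= /bounded_near.
  near=> M => r Kr /=.
  have -> : `|r| = mx_norm r by []; rewrite mx_normrE.
  apply: bigmax_le => //=.
  move=> [i j] _ /=; rewrite (ord1 i).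
  have := hB _ Kr j; rewrite mxE => H; apply: le_trans H _.
  near: M; apply: nbhs_pinfty_ge; exact: num_real.
have Kc : compact K by apply: bounded_closed_compact.
have K0 : K !=set0 by exists z0^T; rewrite /K /= trmxK.
have [c cK cmin] := compact_EVT_min K0 Kc (continuous_subspaceT (lip_cont_rV gl)).
exists c^T; split; first by move: cK; rewrite inE.
move=> y hy; have := cmin y^T; rewrite trmxK; apply.
by rewrite inE /K /= trmxK.
Unshelve. all: by end_near.
Qed.


Definition Gf (R : realType) m (C : set 'cV[R]_m) (p : 'cV[R]_m) : set 'cV[R]_m :=
  [set y | C y /\ exists2 e : R, 0 < e & C (p + e *: (p - y))].

Lemma Gf_p (R : realType) m (C : set 'cV[R]_m) p : C p -> Gf C p p.
Proof. by move=> Cp; split => //; exists 1 => //; rewrite subrr scaler0 addr0. Qed.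

Lemma Gf_ext (R : realType) m (C : set 'cV[R]_m) p x y (s : R) :
  cvx_set C -> C x -> C y -> 0 < s < 1 -> Gf C p (s *: x + (1 - s) *: y) -> Gf C p x.
Proof.
move=> cC Cx Cy /andP[s0 s1] [_ [e e0 Cc]].
set c := p + _ in Cc.
split => //.
have hd : 0 < 1 + e * (1 - s) by rewrite ltr_wpDr // ?mulr_ge0 // ?ltW // subr_gt0.
pose t := (1 + e * (1 - s))^-1.
exists (e * s / (1 + e * (1 - s))); first by rewrite divr_gt0 // mulr_gt0.
have -> : p + e * s / (1 + e * (1 - s)) *: (p - x) = t *: c + (1 - t) *: y.
  rewrite /c /t; apply/matrixP => i j; rewrite !mxE.
  by field; rewrite gt_eqF.
apply: cC => //; rewrite /t invr_ge0 ltW //= invf_le1 //.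
by rewrite lerDl mulr_ge0 // ?ltW // subr_gt0.
Qed.

Lemma Gf_face (R : realType) m (C : set 'cV[R]_m) p :
  cvx_set C -> C p -> is_face C (Gf C p).
Proof.
move=> cC Cp; split.
- by move=> y [].
- move=> y1 y2 s [C1 [e1 e10 Ce1]] [C2 [e2 e20 Ce2]] s01.
  split; first exact: cC.
  pose e := Num.min e1 e2.
  have e0 : 0 < e by rewrite lt_min e10 e20.
  have shr : forall y e', 0 < e' -> e <= e' -> C (p + e' *: (p - y)) -> C (p + e *: (p - y)).
    move=> y e' e'0 ee' Cy.
    have -> : p + e *: (p - y) = (e / e') *: (p + e' *: (p - y)) + (1 - e / e') *: p.
      by apply/matrixP => i j; rewrite !mxE; field; rewrite gt_eqF.
    apply: cC => //; apply/andP; split; first by rewrite divr_ge0 // ltW.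
    by rewrite ler_pdivrMr // mul1r.
  exists e => //.
  have -> : p + e *: (p - (s *: y1 + (1 - s) *: y2)) =
     s *: (p + e *: (p - y1)) + (1 - s) *: (p + e *: (p - y2)).
    by apply/matrixP => i j; rewrite !mxE; ring.
  apply: cC => //.
    by apply: (shr _ e1) => //; rewrite ge_min lexx.
  by apply: (shr _ e2) => //; rewrite ge_min lexx orbT.
- move=> x y t Cx Cy t01 Gw; split; first exact: (Gf_ext cC Cx Cy t01 Gw).
  have t01' : 0 < 1 - t < 1.
    by move: t01 => /andP[? ?]; apply/andP; split; lra.
  apply: (Gf_ext cC Cy Cx t01').
  suff -> : (1 - t) *: y + (1 - (1 - t)) *: x = t *: x + (1 - t) *: y by [].
  by apply/matrixP => i j; rewrite !mxE; ring.
Qed.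


Lemma sum_delta (R : realType) n (j : 'I_n) :
  \sum_i (delta_mx j 0 : 'cV[R]_n) i 0 = 1.
Proof.
rewrite (bigD1 j) //= big1 ?addr0; first by rewrite mxE !eqxx.
by move=> i /negbTE hij; rewrite mxE hij.
Qed.

Lemma simplex_delta (R : realType) n (j : 'I_n) : simplex (delta_mx j 0 : 'cV[R]_n).
Proof. by split; [move=> i; rewrite mxE ler0n | exact: sum_delta]. Qed.

Lemma simplex_le1 (R : realType) n (x : 'cV[R]_n) j : simplex x -> x j 0 <= 1.
Proof.
case=> x0 x1; rewrite -x1 (bigD1 j) //= lerDl.
by apply: sumr_ge0 => i _.
Qed.

Lemma simplex_cvx (R : realType) n (x y : 'cV[R]_n) (t : R) :
  simplex x -> simplex y -> 0 <= t <= 1 -> simplex (t *: x + (1 - t) *: y).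
Proof.
move=> [x0 x1] [y0 y1] /andP[t0 t1]; split.
  move=> i; rewrite !mxE; apply: addr_ge0; apply: mulr_ge0 => //.
  by rewrite subr_ge0.
rewrite (eq_bigr (fun i => t * x i 0 + (1 - t) * y i 0)); last by move=> i _; rewrite !mxE.
by rewrite big_split /= -!mulr_sumr x1 y1; ring.
Qed.

Lemma convhull_cvx (R : realType) m n (A : 'M[R]_(m, n)) : cvx_set (convhullA A).
Proof.
move=> _ _ t [x sx <-] [y sy <-] t01.
exists (t *: x + (1 - t) *: y); first exact: simplex_cvx.
by rewrite mulmxDr !scalemxAr.
Qed.

Lemma col_in_C (R : realType) m n (A : 'M[R]_(m, n)) j : convhullA A (matrix.col j A).
Proof. by exists (delta_mx j 0); [exact: simplex_delta | rewrite colE]. Qed.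

Lemma peel (R : realType) m n (A : 'M[R]_(m, n)) (l : 'cV[R]_n) j (a : R) :
  simplex l -> 0 <= a <= l j 0 -> a < 1 ->
  let mu := (1 - a)^-1 *: (l - a *: delta_mx j 0) in
  [/\ simplex mu, A *m l = a *: matrix.col j A + (1 - a) *: (A *m mu),
      (forall i, l i 0 = 0 -> mu i 0 = 0) & (a = l j 0 -> mu j 0 = 0)].
Proof.
move=> [l0 l1] /andP[a0 al] a1 mu.
have ha : 0 < 1 - a by rewrite subr_gt0.
have ent : forall i, mu i 0 = (1 - a)^-1 * (l i 0 - a * (i == j)%:R).
  by move=> i; rewrite /mu !mxE eqxx andbT.
split.
- split.
    move=> i; rewrite ent; apply: mulr_ge0; first by rewrite invr_ge0 ltW.
    have [->|hij] := eqVneq i j; first by rewrite mulr1 subr_ge0.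
    by rewrite mulr0 subr0.
  rewrite (eq_bigr _ (fun i _ => ent i)) -mulr_sumr sumrB l1 -mulr_sumr.
  have -> : \sum_i (i == j)%:R = 1 :> R.
    by rewrite -[RHS](@sum_delta R n j); apply: eq_bigr => i _; rewrite mxE eqxx andbT.
  by rewrite mulr1 mulVf // gt_eqF.
- rewrite /mu -scalemxAr scalerA mulfV ?gt_eqF // scale1r mulmxBr -scalemxAr -colE.
  by rewrite addrC subrK.
- move=> i li; rewrite ent li.
  have [eij|hij] := eqVneq i j.
    have -> : a = 0 by move: al; rewrite -eij li => al; apply/eqP; rewrite eq_le al a0.
    by rewrite mul0r subrr mulr0.
  by rewrite mulr0 subr0 mulr0.
- by move=> ea; rewrite ent eqxx mulr1 -ea subrr mulr0.
Qed.

Lemma face_supp (R : realType) m n (A : 'M[R]_(m, n)) (F : set 'cV[R]_m) (l : 'cV[R]_n) j :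
  is_face (convhullA A) F -> simplex l -> F (A *m l) -> 0 < l j 0 -> F (matrix.col j A).
Proof.
move=> [_ _ hF] sl Fl lj.
have l1 := simplex_le1 j sl.
have [smu eq _ _] := @peel R m n A l j (l j 0 / 2) sl
  (ltac:(apply/andP; split; lra)) (ltac:(lra)).
rewrite eq in Fl.
have := hF _ _ (l j 0 / 2) (col_in_C A j) _ (ltac:(apply/andP; split; lra)) Fl.
by case; [exists ((1 - l j 0 / 2)^-1 *: (l - l j 0 / 2 *: delta_mx j 0)) |].
Qed.

Lemma simplex_nz (R : realType) n (l : 'cV[R]_n) : simplex l -> exists j, 0 < l j 0.
Proof.
move=> [l0 l1]; case: (pselect (exists j, 0 < l j 0)) => // H; exfalso.
move: l1; rewrite big1 ?(@oner_neq0 R) //; last first.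
  move=> i _; apply/eqP; rewrite eq_le l0 andbT leNgt; apply/negP => hi.
  by apply: H; exists i.
by move=> /eqP; rewrite eq_sym oner_eq0.
Qed.

Lemma face_conv (R : realType) m n (A : 'M[R]_(m, n)) (F : set 'cV[R]_m) :
  cvx_set F -> forall l, simplex l -> (forall j, l j 0 != 0 -> F (matrix.col j A)) ->
  F (A *m l).
Proof.
move=> cF.
suff H : forall k (l : 'cV[R]_n), (#|[pred j | l j ord0 != 0%R]| <= k)%N -> simplex l ->
    (forall j, l j 0 != 0 -> F (matrix.col j A)) -> F (A *m l).
  by move=> l; apply: (H n) => //; rewrite (leq_trans (max_card _)) // card_ord.
elim=> [|k IH] l hk sl hF.
  have [j lj] := simplex_nz sl.
  move: hk; rewrite leqn0 => /eqP/card0_eq/(_ j); rewrite !inE.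
  by rewrite gt_eqF.
have [j lj] := simplex_nz sl.
have := simplex_le1 j sl; rewrite le_eqVlt => /orP[/eqP l1|l1].
  have h0 : forall i, i != j -> l i 0 = 0.
    have : \sum_(i | i != j) l i 0 = 0.
      by move: sl.2; rewrite (bigD1 j) //= l1 => /(congr1 (fun x => x - 1)); rewrite addrC addrK subrr.
    by move=> /(psumr_eq0P (fun i _ => sl.1 i)) H i hi; exact: H.
  rewrite mul_decomp (bigD1 j) //= big1 ?addr0; last first.
    by move=> i hi; rewrite h0 // scale0r.
  by rewrite l1 scale1r; apply: hF; rewrite l1 oner_neq0.
have [smu eq hz hzj] := @peel R m n A l j (l j 0) sl
  (ltac:(apply/andP; split; [exact: ltW | exact: lexx])) l1.
rewrite eq; apply: cF; last by apply/andP; split; [exact: ltW | exact: ltW].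
  by apply: hF; rewrite gt_eqF.
apply: IH => //.
  set mu := (_ *: _).
  have sub : [pred i | mu i 0 != 0] \subset [predD1 [pred i | l i 0 != 0] & j].
    apply/fintype.subsetP => i; rewrite !inE => hi; apply/andP; split.
      by apply: contra hi => /eqP ->; rewrite hzj.
    by apply: contra hi => /eqP /hz ->.
  apply: leq_trans (subset_leq_card sub) _.
  have e := cardD1 j [pred i | l i ord0 != 0%R].
  rewrite inE gt_eqF //= add1n in e.
  by rewrite e ltnS in hk.
- move=> i hi; apply: hF; apply/eqP => li.
  by move: hi; rewrite hz // eqxx.
Qed.


Definition l1 (R : realType) k (v : 'cV[R]_k) : R := \sum_i `|v i 0|.

Lemma l1_ge0 (R : realType) k (v : 'cV[R]_k) : 0 <= l1 v.
Proof. by apply: sumr_ge0 => i _. Qed.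

Lemma inf_ge0 (R : realType) (E : set R) : (forall r, E r -> 0 <= r) -> 0 <= inf E.
Proof.
move=> h; case: (pselect (E !=set0)) => [ne|].
  by apply: lb_le_inf => // r /h.
by move=> /set0P/negP/negPn/eqP ->; rewrite inf0.
Qed.

Lemma setdist_ge0 (R : realType) m (Nm : 'cV[R]_m -> R) F G :
  is_norm Nm -> 0 <= setdist Nm F G.
Proof. by move=> hN; apply: inf_ge0 => r [u [w [_ _ ->]]]; exact: nrm_ge0. Qed.

Lemma facial_dist_ge0 (R : realType) m n (Nm : 'cV[R]_m -> R) (A : 'M[R]_(m, n)) :
  is_norm Nm -> 0 <= facial_dist Nm A.
Proof. by move=> hN; apply: inf_ge0 => r [F [_ _ _ ->]]; exact: setdist_ge0. Qed.

Lemma setdist_le (R : realType) m (Nm : 'cV[R]_m -> R) (F G : set 'cV[R]_m) u w :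
  is_norm Nm -> F u -> G w -> setdist Nm F G <= Nm (u - w).
Proof.
move=> hN Fu Gw; apply: ge_inf; last by exists u, w.
by exists 0 => r [u' [w' [_ _ ->]]]; exact: nrm_ge0.
Qed.

Lemma facial_le (R : realType) m n (Nm : 'cV[R]_m -> R) (A : 'M[R]_(m, n)) F :
  is_norm Nm -> is_face (convhullA A) F -> F != set0 -> F != convhullA A ->
  facial_dist Nm A <= setdist Nm F (convAminus A F).
Proof.
move=> hN fF F0 FC; apply: ge_inf; last by exists F.
by exists 0 => r [F' [_ _ _ ->]]; exact: setdist_ge0.
Qed.

Lemma pm_facts (R : realType) (a b : R) :
  let p := (`|a - b| + (a - b)) / 2 in let q := (`|a - b| - (a - b)) / 2 in
  [/\ p - q = a - b, `|a - b| = p + q, 0 <= p, 0 <= q & (0 <= a -> 0 <= b -> 0 <= b - q)].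
Proof.
move=> p q; rewrite /p /q.
case: (leP (a - b) 0) => h.
  rewrite ler0_norm //; split => //; lra.
rewrite gtr0_norm //; split => //; lra.
Qed.

Definition dpos (R : realType) n (x z : 'cV[R]_n) : 'cV[R]_n :=
  \col_i ((`|x i 0 - z i 0| + (x i 0 - z i 0)) / 2).
Definition dneg (R : realType) n (x z : 'cV[R]_n) : 'cV[R]_n :=
  \col_i ((`|x i 0 - z i 0| - (x i 0 - z i 0)) / 2).

Lemma dfacts (R : realType) n (x z : 'cV[R]_n) : simplex x -> simplex z ->
  [/\ x - z = dpos x z - dneg x z, (forall i, 0 <= dpos x z i 0 /\ 0 <= dneg x z i 0),
      (forall i, 0 <= z i 0 - dneg x z i 0),
      \sum_i dneg x z i 0 = \sum_i dpos x z i 0 &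
      l1 (x - z) = 2 * \sum_i dpos x z i 0].
Proof.
move=> [x0 x1] [z0 z1].
have F i := pm_facts (x i 0) (z i 0).
have exz : x - z = dpos x z - dneg x z.
  by apply/matrixP => i j; rewrite (ord1 j) !mxE; have [-> _ _ _ _] := F i.
split => //.
- by move=> i; rewrite !mxE; have [_ _ -> -> _] := F i.
- by move=> i; rewrite mxE; have [_ _ _ _ ->] := F i.
- apply/eqP; rewrite -subr_eq0 -sumrB.
  rewrite (eq_bigr (fun i => - (x i 0 - z i 0))); last first.
    by move=> i _; rewrite !mxE; lra.
  by rewrite sumrN sumrB x1 z1 subrr oppr0.
- have hs : \sum_i (dneg x z i 0 + dpos x z i 0) = \sum_i `|(x - z) i 0|.
    by apply: eq_bigr => i _; rewrite !mxE; lra.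
  rewrite /l1 -hs big_split /=.
  have -> : \sum_i dneg x z i 0 = \sum_i dpos x z i 0.
    apply/eqP; rewrite -subr_eq0 -sumrB.
    rewrite (eq_bigr (fun i => - (x i 0 - z i 0))); last first.
      by move=> i _; rewrite !mxE; lra.
    by rewrite sumrN sumrB x1 z1 subrr oppr0.
  by rewrite mulr2n mulrDl mul1r.
Qed.

Lemma sum_eqk (R : realType) n (k : 'I_n) : \sum_i ((i == k)%:R : R) = 1.
Proof. by rewrite -[RHS](@sum_delta R n k); apply: eq_bigr => i _; rewrite mxE eqxx andbT. Qed.

Lemma improve (R : realType) m n (A : 'M[R]_(m, n)) (x z u : 'cV[R]_n) k (e : R)
  (w : 'cV[R]_n) (ux : 'cV[R]_m) :
  simplex x -> Zset A ux z ->
  0 < \sum_i dpos x z i 0 -> 0 < dpos x z k 0 -> 0 < e -> simplex w ->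
  A *m w = A *m ((\sum_i dpos x z i 0)^-1 *: dneg x z) +
     e *: (A *m ((\sum_i dpos x z i 0)^-1 *: dneg x z) - matrix.col k A) ->
  exists z2, Zset A ux z2 /\ l1 (x - z2) < l1 (x - z).
Proof.
move=> sx [sz Az] t0 dpk e0 sw Aw.
have [exz dp0 zdm sdm l1e] := dfacts sx sz.
set dp := dpos x z in dpk exz dp0 zdm sdm l1e t0 Aw *.
set dm := dneg x z in exz dp0 zdm sdm l1e Aw *.
set t := \sum_i dp i 0 in t0 Aw sdm l1e *.
set a := e / (1 + e).
have e1 : 0 < 1 + e by lra.
have a0 : 0 < a by rewrite divr_gt0.
have a1 : a < 1 by rewrite ltr_pdivrMr // mul1r; lra.
have ta0 : 0 < t * a by rewrite mulr_gt0.
set th := Num.min 1 (dp k 0 / (t * a)).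
have th0 : 0 < th by rewrite lt_min ltr01 divr_gt0.
have th1 : th <= 1 by rewrite ge_min lexx.
have thk : th * (t * a) <= dp k 0.
  by rewrite -ler_pdivlMr // ge_min lexx orbT.
set z2 := z - th *: dm + (th * t) *: (a *: delta_mx k 0 + (1 - a) *: w).
have ent : forall i, z2 i 0 = z i 0 - th * dm i 0 +
    th * t * (a * (i == k)%:R + (1 - a) * w i 0).
  by move=> i; rewrite !mxE eqxx andbT.
have dl0 : forall i : 'I_n, 0 <= ((i == k)%:R : R) by move=> i; rewrite ler0n.
exists z2; split.
- split; [split|].
  + move=> i; rewrite ent.
    have h1 : 0 <= (1 - th) * dm i 0 by rewrite mulr_ge0 // ?(dp0 i).2 // subr_ge0.
    have h2 : 0 <= th * t * (a * (i == k)%:R + (1 - a) * w i 0).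
      have wi := sw.1 i; have ha : 0 <= 1 - a by lra.
      apply: mulr_ge0; first by apply: mulr_ge0; apply: ltW.
      by apply: addr_ge0; apply: mulr_ge0 => //; apply: ltW.
    have := zdm i; lra.
  + rewrite (eq_bigr _ (fun i _ => ent i)) big_split sumrB /= -!mulr_sumr big_split /=.
    rewrite -!mulr_sumr sum_eqk sw.2 sz.2 sdm; ring.
  + rewrite /z2 mulmxDr mulmxBr -!scalemxAr Az mulmxDr -!scalemxAr Aw -colE.
    rewrite -!scalemxAr.
    apply/matrixP => i j; rewrite !mxE /a.
    by field; rewrite !gt_eqF.
- have bnd : forall i, `|(x - z2) i 0| <= dp i 0 - th * t * a * (i == k)%:R +
       (1 - th) * dm i 0 + th * t * (1 - a) * w i 0.
    move=> i.
    have -> : (x - z2) i 0 = dp i 0 - th * t * a * (i == k)%:R -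
        (1 - th) * dm i 0 - th * t * (1 - a) * w i 0.
      rewrite !mxE eqxx andbT; lra.
    have h0 : 0 <= dp i 0 - th * t * a * (i == k)%:R.
      have [->|hik] := eqVneq i k; last by rewrite mulr0 subr0; exact: (dp0 i).1.
      by rewrite mulr1 subr_ge0 -mulrA.
    have h1 : 0 <= (1 - th) * dm i 0 by rewrite mulr_ge0 // ?(dp0 i).2 // subr_ge0.
    have h2 : 0 <= th * t * (1 - a) * w i 0.
      have wi := sw.1 i; have ha : 0 <= 1 - a by lra.
      by apply: mulr_ge0 => //; apply: mulr_ge0 => //; apply: mulr_ge0; apply: ltW.
    rewrite ler_norml; apply/andP; split; lra.
  apply: le_lt_trans (ler_sum _ (fun i _ => bnd i)) _.
  rewrite !big_split sumrN /= -!mulr_sumr sum_eqk sw.2 l1e sdm -/t.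
  have -> : t - th * t * a * 1 + (1 - th) * t + th * t * (1 - a) * 1 =
     2 * t - 2 * (th * t * a) by ring.
  have : 0 < th * t * a by apply: mulr_gt0 => //; apply: mulr_gt0.
  lra.
Qed.


Lemma scale_simplex (R : realType) n (d : 'cV[R]_n) :
  (forall i, 0 <= d i 0) -> 0 < \sum_i d i 0 -> simplex ((\sum_i d i 0)^-1 *: d).
Proof.
move=> d0 t0; split.
  by move=> i; rewrite mxE mulr_ge0 // invr_ge0 ltW.
rewrite (eq_bigr (fun i => (\sum_i d i 0)^-1 * d i 0)); last by move=> i _; rewrite mxE.
by rewrite -mulr_sumr mulVf // gt_eqF.
Qed.

Lemma key_face (R : realType) m n (Nm : 'cV[R]_m -> R) (A : 'M[R]_(m, n))
  (x z : 'cV[R]_n) (u : 'cV[R]_m) :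
  is_norm Nm -> simplex x -> Zset A u z ->
  (forall z', Zset A u z' -> l1 (x - z) <= l1 (x - z')) ->
  l1 (x - z) = 0 \/
  exists G, [/\ is_face (convhullA A) G, G != set0, G != convhullA A &
     setdist Nm G (convAminus A G) * l1 (x - z) <= 2 * Nm (A *m x - u)].
Proof.
move=> hN sx [sz Az] zmin.
have [exz dp0 zdm sdm l1e] := dfacts sx sz.
set dp := dpos x z in exz dp0 zdm sdm l1e *.
set dm := dneg x z in exz dp0 zdm sdm l1e *.
set t := \sum_i dp i 0 in sdm l1e *.
have tge0 : 0 <= t by apply: sumr_ge0 => i _; exact: (dp0 i).1.
move: tge0; rewrite le_eqVlt => /orP[/eqP t0|t0].
  by left; rewrite l1e -t0 mulr0.
right.
have slp : simplex (t^-1 *: dp) by apply: scale_simplex => // i; exact: (dp0 i).1.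
have slm : simplex (t^-1 *: dm).
  by rewrite -sdm; apply: scale_simplex => [i|]; [exact: (dp0 i).2 | rewrite sdm].
set pm := A *m (t^-1 *: dm).
set pp := A *m (t^-1 *: dp).
have Cpm : convhullA A pm by exists (t^-1 *: dm).
have cC : cvx_set (convhullA A) by exact: convhull_cvx.
set G := Gf (convhullA A) pm.
have iii : forall k, 0 < dp k 0 -> ~ G (matrix.col k A).
  move=> k dpk [Ck [e e0 Ce]]; case: Ce => w sw Aw.
  have [z2 [Zz2 lt]] := @improve R m n A x z x k e w u sx (conj sz Az) t0 dpk e0 sw Aw.
  by have := zmin z2 Zz2; rewrite leNgt lt.
have [k dpk] : exists k, 0 < dp k 0.
  have [k lk] := simplex_nz slp; exists k; move: lk; rewrite mxE.
  by rewrite pmulr_rgt0 // invr_gt0.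
exists G; split.
- exact: Gf_face.
- by apply/eqP => H; have := Gf_p Cpm; rewrite -/G H.
- by apply/eqP => H; apply: (iii k dpk); rewrite H; exact: col_in_C.
have cA : convAminus A G pp.
  exists (t^-1 *: dp) => //; split => // j Gj; rewrite mxE.
  have := (dp0 j).1; rewrite le_eqVlt => /orP[/eqP <-|dj]; first by rewrite mulr0.
  by exfalso; exact: (iii j dj).
have sd := setdist_le hN (Gf_p Cpm) cA.
have eqN : Nm (A *m x - u) = t * Nm (pm - pp).
  have -> : A *m x - u = t *: (pp - pm).
    rewrite -Az -mulmxBr exz /pp /pm -!scalemxAr scalerBr !scalerA mulfV ?gt_eqF //.
    by rewrite !scale1r mulmxBr.
  by rewrite (nrmB _ _ hN); case: hN => _ hZ _; rewrite hZ gtr0_norm.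
rewrite eqN l1e.
have sd0 := setdist_ge0 G (convAminus A G) hN.
rewrite mulrA [setdist _ _ _ * 2]mulrC -mulrA ler_pM2l // [t * _]mulrC ler_pM2r //.
Qed.


Lemma lipD (R : realType) k (g1 g2 : 'cV[R]_k -> R) :
  lipE g1 -> lipE g2 -> lipE (fun z => g1 z + g2 z).
Proof.
move=> [C1 C10 h1] [C2 C20 h2]; exists (C1 + C2); first exact: addr_ge0.
move=> x y e e0 he; rewrite mulrDl.
apply: le_trans (_ : `|g1 x - g1 y| + `|g2 x - g2 y| <= _); last first.
  by apply: lerD; [exact: h1 | exact: h2].
by rewrite (_ : _ - _ = (g1 x - g1 y) + (g2 x - g2 y)); [exact: ler_normD | ring].
Qed.

Lemma lip_sum (R : realType) k (I : finType) (g : I -> 'cV[R]_k -> R) :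
  (forall i, lipE (g i)) -> lipE (fun z => \sum_i g i z).
Proof.
move=> hg.
have [C hC] : exists C : I -> R, forall i, 0 <= C i /\ forall (x y : 'cV[R]_k) (e : R), 0 <= e ->
    (forall j, `|x j 0 - y j 0| <= e) -> `|g i x - g i y| <= C i * e.
  exists (fun i => projT1 (cid2 (hg i))) => i.
  by case: (cid2 (hg i)) => C0 /= C00 hC0; split.
exists (\sum_i C i); first by apply: sumr_ge0 => i _; exact: (hC i).1.
move=> x y e e0 he; rewrite -sumrB mulr_suml.
apply: le_trans (ler_norm_sum _ _ _) _.
by apply: ler_sum => i _; apply: (hC i).2.
Qed.

Lemma lip_coord (R : realType) k (phi : R -> R) (i : 'I_k) (L : R) :
  0 <= L -> (forall a b, `|phi a - phi b| <= L * `|a - b|) -> lipE (fun z : 'cV[R]_k => phi (z i 0)).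
Proof.
move=> L0 hphi; exists L => // x y e e0 he.
by apply: le_trans (hphi _ _) _; apply: ler_wpM2l => //; rewrite !mxE in he *; exact: he.
Qed.

Lemma lip_abs (R : realType) k (g : 'cV[R]_k -> R) (b : R) :
  lipE g -> lipE (fun z => `|g z + b|).
Proof.
move=> [C C0 h]; exists C => // x y e e0 he.
apply: le_trans (ler_dist_dist _ _) _.
by rewrite opprD addrACA subrr addr0; exact: h.
Qed.

Lemma nrm_rev (R : realType) k (N : 'cV[R]_k -> R) a b :
  is_norm N -> `|N a - N b| <= N (a - b).
Proof.
move=> hN; have := hN => -[_ _ hT].
have h1 : N a - N b <= N (a - b).
  by have := hT (a - b) b; rewrite subrK; lra.
have h2 : N b - N a <= N (a - b).
  by have := hT (b - a) a; rewrite subrK (nrmB _ _ hN); lra.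
by rewrite ler_norml; apply/andP; split; lra.
Qed.

Lemma lip_nrmA (R : realType) m k (N : 'cV[R]_m -> R) (A : 'M[R]_(m, k)) (c : 'cV[R]_m) :
  is_norm N -> lipE (fun z => N (A *m z - c)).
Proof.
move=> hN; exists (\sum_i N (matrix.col i A)).
  by apply: sumr_ge0 => i _; exact: nrm_ge0.
move=> x y e e0 he.
apply: le_trans (nrm_rev _ _ hN) _.
have -> : A *m x - c - (A *m y - c) = A *m (x - y) by rewrite mulmxBr; apply/matrixP => i j; rewrite !mxE; ring.
apply: le_trans (nrm_mul_le _ _ hN) _.
rewrite mulr_suml; apply: ler_sum => i _; rewrite mulrC; apply: ler_wpM2l.
  exact: nrm_ge0.
by have := he i; rewrite !mxE.
Qed.

Lemma lip_lin (R : realType) k (c : 'I_k -> R) :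
  lipE (fun z : 'cV[R]_k => \sum_i c i * z i 0).
Proof.
apply: lip_sum => i; apply: (@lip_coord _ _ (fun a => c i * a) i `|c i|) => // a b.
by rewrite -mulrBr normrM.
Qed.

Lemma lip_l1 (R : realType) k (x : 'cV[R]_k) : lipE (fun z => l1 (x - z)).
Proof.
have -> : (fun z => l1 (x - z)) = (fun z => \sum_i `|x i 0 - z i 0|).
  by apply: funext => z; apply: eq_bigr => i _; rewrite !mxE.
apply: lip_sum => i; apply: (@lip_coord _ _ (fun a => `|x i 0 - a|) i 1) => // a b.
by rewrite mul1r; apply: le_trans (ler_dist_dist _ _) _; rewrite opprB addrC addrA subrK distrC.
Qed.


Lemma sum0_each (R : realType) (I : finType) (F : I -> R) :
  (forall i, 0 <= F i) -> \sum_i F i <= 0 -> forall i, F i = 0.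
Proof.
move=> F0 s0 i; apply/eqP; rewrite eq_le F0 andbT.
by apply: le_trans s0; rewrite (bigD1 i) //= lerDl sumr_ge0.
Qed.

Lemma nrm_eq0 (R : realType) k (N : 'cV[R]_k -> R) x : is_norm N -> N x <= 0 -> x = 0.
Proof.
move=> hN h; have := hN => -[h0 _ _]; apply: h0; apply/eqP; rewrite eq_le h.
exact: nrm_ge0.
Qed.

Lemma lip_nrm (R : realType) k (N : 'cV[R]_k -> R) : is_norm N -> lipE N.
Proof.
move=> hN; have := lip_nrmA 1%:M 0 hN.
suff -> : (fun z => N (1%:M *m z - 0)) = N by [].
by apply: funext => z; rewrite mul1mx subr0.
Qed.

Lemma lip_posp (R : realType) k (s : 'I_k -> R) :
  (forall i, `|s i| <= 1) -> lipE (fun z : 'cV[R]_k => \sum_i (`|z i 0| - s i * z i 0)).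
Proof.
move=> hs; apply: lip_sum => i.
apply: (@lip_coord _ _ (fun a => `|a| - s i * a) i 2) => // a b /=.
have -> : `|a| - s i * a - (`|b| - s i * b) = (`|a| - `|b|) - s i * (a - b) by ring.
apply: le_trans (ler_normB _ _) _; rewrite normrM.
have h1 := ler_dist_dist a b.
have h2 : `|s i| * `|a - b| <= `|a - b| by rewrite ler_piMl.
lra.
Qed.

Definition pen (R : realType) k (z : 'cV[R]_k) : R :=
  \sum_i (`|z i 0| - 1 * z i 0) + `|\sum_i 1 * z i 0 + (-1)|.

Lemma lip_pen (R : realType) k : lipE (@pen R k).
Proof.
apply: lipD; first by apply: lip_posp => i; rewrite normr1.
exact/lip_abs/lip_lin.
Qed.

Lemma pen_ge0 (R : realType) k (z : 'cV[R]_k) : 0 <= pen z.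
Proof.
apply: addr_ge0 => //.
by apply: sumr_ge0 => i _; rewrite mul1r subr_ge0 ler_norm.
Qed.

Lemma pen_simplex (R : realType) k (z : 'cV[R]_k) : pen z <= 0 -> simplex z.
Proof.
rewrite /pen => h.
have a0 : 0 <= \sum_i (`|z i 0| - 1 * z i 0).
  by apply: sumr_ge0 => i _; rewrite mul1r subr_ge0 ler_norm.
have b0 := normr_ge0 (\sum_i 1 * z i 0 + (-1)).
have ha : \sum_i (`|z i 0| - 1 * z i 0) <= 0 by lra.
have hb : `|\sum_i 1 * z i 0 + (-1)| <= 0 by lra.
split.
  move=> i.
  have hF : forall j, 0 <= `|z j 0| - 1 * z j 0.
    by move=> j; rewrite mul1r subr_ge0 ler_norm.
  have := sum0_each hF ha i; move=> /eqP; rewrite mul1r subr_eq0 => /eqP <-.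
  by [].
move: hb; rewrite normr_le0 addr_eq0 opprK => /eqP <-.
by apply: eq_bigr => i _; rewrite mul1r.
Qed.

Lemma simplex_pen (R : realType) k (z : 'cV[R]_k) : simplex z -> pen z <= 0.
Proof.
move=> [z0 z1]; rewrite /pen big1 ?add0r.
  by rewrite (eq_bigr (fun i => z i 0)) ?z1 ?subrr ?normr0 // => i _; rewrite mul1r.
by move=> i _; rewrite mul1r ger0_norm ?subrr.
Qed.

Lemma Z_min (R : realType) m n (Nm : 'cV[R]_m -> R) (A : 'M[R]_(m, n))
  (x : 'cV[R]_n) (u : 'cV[R]_m) :
  is_norm Nm -> convhullA A u ->
  exists z, Zset A u z /\ forall z', Zset A u z' -> l1 (x - z) <= l1 (x - z').
Proof.
move=> hN [l sl Al].
pose h z := pen z + Nm (A *m z - u).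
have hiff : forall z, h z <= 0 <-> Zset A u z.
  move=> z; split.
    move=> hz; have p0 := pen_ge0 z; have n0 := nrm_ge0 (A *m z - u) hN.
    split; first by apply: pen_simplex; rewrite /h in hz; lra.
    apply/eqP; rewrite -subr_eq0; apply/eqP; apply: (nrm_eq0 hN).
    rewrite /h in hz; lra.
  move=> [sz Az]; rewrite /h Az subrr (nrm0 hN) addr0; exact: simplex_pen.
have [z [hz zmin]] := @EVT_cV R n h (fun z => l1 (x - z)) 1
  (lipD (@lip_pen R n) (lip_nrmA A u hN)) (lip_l1 x)
  (ltac:(exists l; apply/hiff; split => //))
  (ltac:(move=> z /hiff [sz _] i; rewrite ger0_norm; [exact: simplex_le1 | exact: sz.1])).
exists z; split; first exact/hiff.
by move=> z' /hiff; exact: zmin.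
Qed.

Lemma nrm_pos (R : realType) k (N : 'cV[R]_k -> R) x : is_norm N -> x != 0 -> 0 < N x.
Proof.
move=> hN x0; rewrite lt_neqAle nrm_ge0 // andbT eq_sym.
by apply: contra x0 => /eqP h; apply/eqP; apply: (nrm_eq0 hN); rewrite h.
Qed.

Lemma l1_eq0 (R : realType) k (v : 'cV[R]_k) : l1 v = 0 -> v = 0.
Proof.
move=> h; apply/matrixP => i j; rewrite (ord1 j) mxE; apply/eqP.
rewrite -normr_eq0; apply/eqP.
by apply: (@sum0_each R _ (fun i => `|v i 0|)) => //; rewrite /l1 in h; rewrite h.
Qed.

Lemma l1Z (R : realType) k (v : 'cV[R]_k) (a : R) : l1 (a *: v) = `|a| * l1 v.
Proof. by rewrite /l1 mulr_sumr; apply: eq_bigr => i _; rewrite mxE normrM. Qed.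

Lemma nrm_equiv (R : realType) n (Nn : 'cV[R]_n -> R) :
  is_norm Nn -> (0 < n)%N -> exists2 c, 0 < c & forall w, c * l1 w <= Nn w.
Proof.
move=> hN n0.
pose h (w : 'cV[R]_n) := `|\sum_i `|w i 0| + (-1)|.
have hl : lipE h.
  apply: lip_abs; apply: lip_sum => i.
  apply: (@lip_coord _ _ (fun a => `|a|) i 1) => // a b.
  by rewrite mul1r ler_dist_dist.
have hiff : forall w, h w <= 0 <-> l1 w = 1.
  move=> w; rewrite /h normr_le0 addr_eq0 opprK; split; by move=> /eqP.
pose j0 : 'I_n := Ordinal n0.
have [w [hw wmin]] := @EVT_cV R n h Nn 1 hl (lip_nrm hN)
  (ltac:(exists (delta_mx j0 0); apply/hiff; rewrite /l1 -(@sum_delta R n j0);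
         by apply: eq_bigr => i _; rewrite ger0_norm // mxE ler0n))
  (ltac:(move=> w /hiff l1w i; rewrite -l1w /l1 (bigD1 i) //= lerDl;
         by apply: sumr_ge0)).
have w0 : w != 0.
  by apply/eqP => w0; move: hw; rewrite hiff w0 /l1 big1 => [/esym/eqP|i _];
    rewrite ?oner_eq0 // mxE normr0.
exists (Nn w); first exact: nrm_pos.
move=> v; have [v0|v0] := eqVneq (l1 v) 0; first by rewrite v0 mulr0 nrm_ge0.
have lp : 0 < l1 v by rewrite lt_neqAle eq_sym v0 l1_ge0.
have := wmin ((l1 v)^-1 *: v) (ltac:(apply/hiff; rewrite l1Z ger0_norm ?invr_ge0 ?ltW //;
  by rewrite mulVf)).
move=> H; have hinv : 0 <= (l1 v)^-1 by rewrite invr_ge0 ltW.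
have := hN => -[_ hZ _]; rewrite hZ (ger0_norm hinv) in H.
by rewrite -ler_pdivlMr // mulrC.
Qed.


Definition cI (R : realType) n (I : {set 'I_n}) (i : 'I_n) : R := (i \in I)%:R.

Definition penI (R : realType) n (I : {set 'I_n}) (v : 'cV[R]_n) : R :=
  \sum_i (`|v i 0| - (2 * cI R I i - 1) * v i 0) +
  `|\sum_i cI R I i * v i 0 + (-1)| + `|\sum_i (1 - cI R I i) * v i 0 + 1|.

Lemma cI01 (R : realType) n (I : {set 'I_n}) i :
  (i \in I -> cI R I i = 1) /\ (i \notin I -> cI R I i = 0).
Proof. by rewrite /cI; split => [->|/negbTE ->]. Qed.

Lemma lip_penI (R : realType) n (I : {set 'I_n}) : lipE (@penI R n I).
Proof.
apply: lipD; last exact/lip_abs/lip_lin.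
apply: lipD; last exact/lip_abs/lip_lin.
apply: lip_posp => i; rewrite /cI.
case: (i \in I) => /=.
  by rewrite mulr1 (_ : 2 - 1 = 1 :> R) ?normr1 //; lra.
by rewrite mulr0 sub0r normrN normr1.
Qed.

Lemma penI_facts (R : realType) n (I : {set 'I_n}) (v : 'cV[R]_n) : penI I v <= 0 ->
  [/\ (forall i, `|v i 0| = (2 * cI R I i - 1) * v i 0),
      \sum_i cI R I i * v i 0 = 1 & \sum_i (1 - cI R I i) * v i 0 = -1].
Proof.
rewrite /penI => h.
have hF : forall i, 0 <= `|v i 0| - (2 * cI R I i - 1) * v i 0.
  move=> i; rewrite subr_ge0; rewrite /cI; case: (i \in I) => /=.
    by rewrite mulr1 (_ : 2 - 1 = 1 :> R) ?mul1r ?ler_norm //; lra.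
  by rewrite mulr0 sub0r mulN1r -normrN ler_norm.
have a0 : 0 <= \sum_i (`|v i 0| - (2 * cI R I i - 1) * v i 0) by apply: sumr_ge0.
have b0 := normr_ge0 (\sum_i cI R I i * v i 0 + (-1)).
have c0 := normr_ge0 (\sum_i (1 - cI R I i) * v i 0 + 1).
split.
- move=> i; apply/eqP; rewrite -subr_eq0; apply/eqP.
  by apply: (sum0_each hF); lra.
- have : `|\sum_i cI R I i * v i 0 + (-1)| <= 0 by lra.
  by rewrite normr_le0 addr_eq0 opprK => /eqP.
- have : `|\sum_i (1 - cI R I i) * v i 0 + 1| <= 0 by lra.
  by rewrite normr_le0 addr_eq0 => /eqP.
Qed.

Lemma penI_diff (R : realType) n (I : {set 'I_n}) (l mu : 'cV[R]_n) :
  simplex l -> simplex mu -> (forall i, i \notin I -> l i 0 = 0) ->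
  (forall i, i \in I -> mu i 0 = 0) -> penI I (l - mu) <= 0.
Proof.
move=> [l0 l1] [m0 m1] hl hm.
have e1 : forall i, cI R I i * (l - mu) i 0 = l i 0.
  move=> i; rewrite !mxE; have [h1 h2] := cI01 R I i.
  by case: (boolP (i \in I)) => hi; [rewrite h1 // hm // | rewrite h2 // hl //]; ring.
have e2 : forall i, (1 - cI R I i) * (l - mu) i 0 = - mu i 0.
  move=> i; rewrite !mxE; have [h1 h2] := cI01 R I i.
  by case: (boolP (i \in I)) => hi; [rewrite h1 // hm // | rewrite h2 // hl //]; ring.
rewrite /penI (eq_bigr _ (fun i _ => e1 i)) (eq_bigr _ (fun i _ => e2 i)) l1 sumrN m1.
rewrite subrr addNr normr0 !addr0 big1 // => i _.
rewrite !mxE; have [h1 h2] := cI01 R I i.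
case: (boolP (i \in I)) => hi; [rewrite h1 // hm // | rewrite h2 // hl //].
  by rewrite subr0 ger0_norm ?l0 //; ring.
by rewrite sub0r normrN ger0_norm ?m0 //; ring.
Qed.

Lemma penI_bound (R : realType) n (I : {set 'I_n}) (v : 'cV[R]_n) i :
  penI I v <= 0 -> `|v i 0| <= 2.
Proof.
move=> /penI_facts [ha s1 s2].
have : \sum_j `|v j 0| = 2.
  rewrite (eq_bigr _ (fun j _ => ha j)).
  have -> : \sum_j (2 * cI R I j - 1) * v j 0 =
     \sum_j cI R I j * v j 0 - \sum_j (1 - cI R I j) * v j 0.
    by rewrite -sumrB; apply: eq_bigr => j _; ring.
  by rewrite s1 s2; lra.
move=> <-; rewrite (bigD1 i) //= lerDl; exact: sumr_ge0.
Qed.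

Definition dd (R : realType) m n (Nm : 'cV[R]_m -> R) (A : 'M[R]_(m, n)) (I : {set 'I_n}) : R :=
  inf [set r | exists v, penI I v <= 0 /\ r = Nm (A *m v)].

Lemma face_lb (R : realType) m n (Nm : 'cV[R]_m -> R) (A : 'M[R]_(m, n)) (F : set 'cV[R]_m) :
  is_norm Nm -> is_face (convhullA A) F -> F != set0 -> F != convhullA A ->
  let I := finset (fun j : 'I_n => `[< F (matrix.col j A) >]) in
  0 < dd Nm A I /\ dd Nm A I <= setdist Nm F (convAminus A F).
Proof.
move=> hN hF F0 FC I.
have hI : forall j, (j \in I) <-> F (matrix.col j A).
  by move=> j; rewrite /I inE; split => /asboolP.
have := hF => -[FsC cF _].
have [u0 Fu0] : exists u, F u by move/set0P: F0 => [u Fu]; exists u.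
have [j1 nj1] : exists j, ~ F (matrix.col j A).
  case: (pselect (exists j, ~ F (matrix.col j A))) => // H; exfalso.
  move/eqP: FC; apply; apply/seteqP; split => // y [l sl <-].
  apply: face_conv => // j _; case: (pselect (F (matrix.col j A))) => // Hj.
  by exfalso; apply: H; exists j.
have LB : forall u w, F u -> convAminus A F w -> exists v, penI I v <= 0 /\ u - w = A *m v.
  move=> u w Fu [mu [smu hmu] <-].
  have [l sl Al] := FsC u Fu.
  exists (l - mu); split; last by rewrite mulmxBr Al.
  apply: penI_diff => // i.
    move=> ni; have := sl.1 i; rewrite le_eqVlt => /orP[/eqP <- //|li].
    by exfalso; move/negP: ni; apply; apply/hI; apply: (face_supp hF sl) => //; rewrite Al.
  by move=> /hI; exact: hmu.
have Cw1 : convAminus A F (matrix.col j1 A).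
  exists (delta_mx j1 0); last by rewrite colE.
  split; first exact: simplex_delta.
  move=> j Fj; rewrite mxE; case: (eqVneq j j1) => [ej|//]; first by rewrite ej in Fj.
have [v0 [pv0 _]] := LB _ _ Fu0 Cw1.
have [vs [pvs vmin]] := @EVT_cV R n (penI I) (fun v => Nm (A *m v - 0)) 2
  (@lip_penI R n I) (lip_nrmA A 0 hN) (ltac:(by exists v0))
  (fun v hv i => penI_bound i hv).
have pos : 0 < Nm (A *m vs).
  rewrite lt_neqAle nrm_ge0 // andbT; apply/negP => /eqP h0.
  have Av : A *m vs = 0 by apply: (nrm_eq0 hN); rewrite -h0.
  have [ha s1 s2] := penI_facts pvs.
  pose l := \col_i (cI R I i * vs i 0).
  pose mu := \col_i ((cI R I i - 1) * vs i 0).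
  have sg : forall i, (i \in I -> 0 <= vs i 0) /\ (i \notin I -> vs i 0 <= 0).
    move=> i; have [h1 h2] := cI01 R I i; split => hi; have := ha i.
      by rewrite h1 // => e; have := normr_ge0 (vs i 0); rewrite e; lra.
    by rewrite h2 // => e; have := normr_ge0 (vs i 0); rewrite e; lra.
  have sl : simplex l.
    split.
      move=> i; rewrite mxE; have [h1 h2] := cI01 R I i; have [g1 g2] := sg i.
      by case: (boolP (i \in I)) => hi; [rewrite h1 // mul1r g1 | rewrite h2 // mul0r].
    by rewrite -s1; apply: eq_bigr => i _; rewrite mxE.
  have smu : simplex mu.
    split.
      move=> i; rewrite mxE; have [h1 h2] := cI01 R I i; have [g1 g2] := sg i.
      case: (boolP (i \in I)) => hi; first by rewrite h1 // subrr mul0r.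
      by rewrite h2 // sub0r mulN1r oppr_ge0 g2.
    rewrite (eq_bigr (fun i => - ((1 - cI R I i) * vs i 0))); last first.
      by move=> i _; rewrite mxE; ring.
    by rewrite sumrN s2 opprK.
  have vlm : vs = l - mu by apply/matrixP => i j; rewrite (ord1 j) !mxE; ring.
  have Alm : A *m l = A *m mu.
    by apply/eqP; rewrite -subr_eq0 -mulmxBr -vlm Av.
  have Fl : F (A *m l).
    apply: face_conv => // j; rewrite mxE; have [h1 h2] := cI01 R I j.
    case: (boolP (j \in I)) => hj; first by move=> _; apply/hI.
    by rewrite h2 // mul0r eqxx.
  rewrite Alm in Fl.
  have [j mj] := simplex_nz smu.
  have /hI jI := face_supp hF smu Fl mj.
  by move: mj; rewrite mxE (cI01 R I j).1 // subrr mul0r ltxx.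
have ddpos : Nm (A *m vs) <= dd Nm A I.
  apply: lb_le_inf; first by exists (Nm (A *m vs)), vs.
  move=> r [v [pv ->]]; have := vmin v pv; by rewrite !subr0.
split; first exact: lt_le_trans ddpos.
apply: lb_le_inf; first by exists (Nm (u0 - matrix.col j1 A)), u0, (matrix.col j1 A).
move=> r [u [w [Fu Cw ->]]].
have [v [pv ->]] := LB u w Fu Cw.
apply: ge_inf; last by exists v.
by exists 0 => r' [v' [_ ->]]; exact: nrm_ge0.
Qed.

Lemma Phi_pos (R : realType) m n (Nm : 'cV[R]_m -> R) (A : 'M[R]_(m, n)) :
  is_norm Nm ->
  (exists F, [/\ is_face (convhullA A) F, F != set0 & F != convhullA A]) ->
  0 < facial_dist Nm A.
Proof.
move=> hN [F0 [f0 n0 p0]].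
pose d := \big[Num.min/1]_(I : {set 'I_n} | 0 < dd Nm A I) dd Nm A I.
have d0 : 0 < d.
  apply: (big_ind (fun x => 0 < x)) => //; first by move=> x y x0 y0; rewrite lt_min x0 y0.
apply: lt_le_trans d0 _; apply: lb_le_inf.
  by exists (setdist Nm F0 (convAminus A F0)), F0.
move=> r [F [fF nF pF ->]]; have [p le] := face_lb hN fF nF pF.
apply: le_trans le; exact: bigmin_le_cond.
Qed.


Lemma Z_ming (R : realType) m n (Nm : 'cV[R]_m -> R) (A : 'M[R]_(m, n))
  (u : 'cV[R]_m) (g : 'cV[R]_n -> R) :
  is_norm Nm -> convhullA A u -> lipE g ->
  exists z, Zset A u z /\ forall z', Zset A u z' -> g z <= g z'.
Proof.
move=> hN [l sl Al] gl.
pose h z := pen z + Nm (A *m z - u).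
have hiff : forall z, h z <= 0 <-> Zset A u z.
  move=> z; split.
    move=> hz; have p0 := pen_ge0 z; have n0 := nrm_ge0 (A *m z - u) hN.
    split; first by apply: pen_simplex; rewrite /h in hz; lra.
    apply/eqP; rewrite -subr_eq0; apply/eqP; apply: (nrm_eq0 hN).
    rewrite /h in hz; lra.
  move=> [sz Az]; rewrite /h Az subrr (nrm0 hN) addr0; exact: simplex_pen.
have [z [hz zmin]] := @EVT_cV R n h g 1
  (lipD (@lip_pen R n) (lip_nrmA A u hN)) gl
  (ltac:(exists l; apply/hiff; split => //))
  (ltac:(move=> z /hiff [sz _] i; rewrite ger0_norm; [exact: simplex_le1 | exact: sz.1])).
exists z; split; first exact/hiff.
by move=> z' /hiff; exact: zmin.
Qed.

Lemma lip_dist (R : realType) n (Nn : 'cV[R]_n -> R) (x : 'cV[R]_n) :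
  is_norm Nn -> lipE (fun z => Nn (x - z)).
Proof.
move=> hN; have := lip_nrmA 1%:M x hN.
suff -> : (fun z => Nn (1%:M *m z - x)) = (fun z => Nn (x - z)) by [].
by apply: funext => z; rewrite mul1mx (nrmB _ _ hN).
Qed.

Lemma entry_le_l1 (R : realType) n (w : 'cV[R]_n) i : `|w i 0| <= l1 w.
Proof. by rewrite /l1 (bigD1 i) //= lerDl; apply: sumr_ge0. Qed.

Lemma rho_props (R : realType) m n (Nm : 'cV[R]_m -> R) (Nn : 'cV[R]_n -> R)
  (A : 'M[R]_(m, n)) :
  is_norm Nm -> is_norm Nn -> (exists i j : 'I_n, i != j) ->
  0 <= ratio_max Nm Nn A /\
  forall w : 'cV[R]_n, w != 0 -> \sum_i w i 0 = 0 -> Nm (A *m w) ^+ 2 <= ratio_max Nm Nn A * Nn w ^+ 2.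
Proof.
move=> hNm hNn [i [j ij]].
have n0 : (0 < n)%N by apply: leq_ltn_trans (ltn_ord i).
have [c c0 hc] := nrm_equiv hNn n0.
pose S := \sum_k Nm (matrix.col k A).
have S0 : 0 <= S by apply: sumr_ge0 => k _; exact: nrm_ge0.
have bnd : forall w : 'cV[R]_n, w != 0 -> Nm (A *m w) ^+ 2 / Nn w ^+ 2 <= (S / c) ^+ 2.
  move=> w w0; have Nw := nrm_pos hNn w0.
  have h1 : Nm (A *m w) <= l1 w * S.
    apply: le_trans (nrm_mul_le _ _ hNm) _; rewrite /S mulr_sumr.
    by apply: ler_sum => k _; apply: ler_wpM2r; [exact: nrm_ge0 | exact: entry_le_l1].
  have h2 : l1 w <= Nn w / c by rewrite ler_pdivlMr // mulrC hc.
  have h3 : Nm (A *m w) <= Nn w * (S / c).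
    apply: le_trans h1 _; rewrite mulrA mulrAC; apply: ler_wpM2r => //.
  have h4 : Nm (A *m w) ^+ 2 <= (Nn w * (S / c)) ^+ 2.
    by rewrite !expr2; apply: ler_pM => //; exact: nrm_ge0.
  rewrite ler_pdivrMr ?exprn_gt0 //; by rewrite exprMn mulrC in h4.
pose w0 : 'cV[R]_n := delta_mx i 0 - delta_mx j 0.
have w00 : w0 != 0.
  apply/eqP => /matrixP /(_ i 0); rewrite !mxE eqxx (negbTE ij) /=; lra.
have sw0 : \sum_k w0 k 0 = 0.
  rewrite (eq_bigr (fun k => (delta_mx i 0 : 'cV[R]_n) k 0 - (delta_mx j 0 : 'cV[R]_n) k 0)).
    by rewrite sumrB !sum_delta subrr.
  by move=> k _; rewrite !mxE.
have hs : has_sup [set r | exists w : 'cV[R]_n, [/\ w != 0, \sum_(i < n) w i 0 = 0 &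
     r = Nm (A *m w) ^+ 2 / Nn w ^+ 2]].
  split; first by exists (Nm (A *m w0) ^+ 2 / Nn w0 ^+ 2), w0.
  by exists ((S / c) ^+ 2) => r [w [wn _ ->]]; exact: bnd.
have ub := sup_upper_bound hs.
split.
  apply: le_trans (ub (Nm (A *m w0) ^+ 2 / Nn w0 ^+ 2) _); last by exists w0.
  by apply: divr_ge0; apply: exprn_ge0; exact: nrm_ge0.
move=> w wn sw; have Nw := nrm_pos hNn wn.
rewrite -ler_pdivrMr ?exprn_gt0 //; apply: ub; by exists w.
Qed.

Lemma sq_le (R : realType) (a b : R) : 0 <= a -> a <= b -> a ^+ 2 <= b ^+ 2.
Proof. by move=> a0 ab; rewrite !expr2; apply: ler_pM. Qed.

Lemma basis_bound (R : realType) n (Nn : 'cV[R]_n -> R) :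
  is_norm Nn -> (0 < n)%N ->
  0 < max_basis_sq Nn /\ forall v, Nn v ^+ 2 <= max_basis_sq Nn * l1 v ^+ 2.
Proof.
move=> hN n0; set mb := max_basis_sq Nn.
have hle : forall i, Nn (delta_mx i 0) ^+ 2 <= mb.
  by move=> i; rewrite /mb /max_basis_sq; apply: le_bigmax.
have mb0 : 0 < mb.
  apply: lt_le_trans (hle (Ordinal n0)); rewrite exprn_gt0 //; apply: nrm_pos => //.
  by apply/eqP => /matrixP /(_ (Ordinal n0) 0); rewrite !mxE !eqxx /=; apply/eqP; rewrite oner_eq0.
split => // v.
have he : forall i, Nn (delta_mx i 0) <= Num.sqrt mb.
  move=> i; rewrite -(ger0_norm (nrm_ge0 (delta_mx i 0) hN)) -sqrtr_sqr (ler_sqrt _ (ltW mb0)); exact: hle.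
have h1 : Nn v <= Num.sqrt mb * l1 v.
  apply: le_trans (nrm_le_l1 _ hN) _; rewrite /l1 mulr_sumr.
  by apply: ler_sum => i _; rewrite mulrC; apply: ler_wpM2r.
have := sq_le (nrm_ge0 v hN) h1; rewrite exprMn sqr_sqrtr //; exact: ltW.
Qed.

Lemma distZ_min (R : realType) m n (Nm : 'cV[R]_m -> R) (Nn : 'cV[R]_n -> R)
  (A : 'M[R]_(m, n)) (x : 'cV[R]_n) (u : 'cV[R]_m) :
  is_norm Nm -> is_norm Nn -> convhullA A u -> simplex x -> ~ Zset A u x ->
  exists z, [/\ Zset A u z, distZ Nn A x u = Nn (x - z), 0 < Nn (x - z) &
    forall z', Zset A u z' -> Nn (x - z) <= Nn (x - z')].
Proof.
move=> hNm hNn Cu sx nZ.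
have [z [Zz zmin]] := Z_ming hNm Cu (lip_dist x hNn).
exists z; split => //.
- apply/eqP; rewrite eq_le; apply/andP; split.
    apply: ge_inf; last by exists z.
    by exists 0 => r [z' [_ ->]]; exact: nrm_ge0.
  apply: lb_le_inf; first by exists (Nn (x - z)), z.
  by move=> r [z' [Zz' ->]]; exact: zmin.
- apply: nrm_pos => //; rewrite subr_eq0; apply/eqP => xz.
  by apply: nZ; rewrite xz.
Qed.


Lemma elem_bounds (R : realType) m n (Nm : 'cV[R]_m -> R) (Nn : 'cV[R]_n -> R)
  (A : 'M[R]_(m, n)) (f : 'cV[R]_m -> R) (Lf muf : R) (u : 'cV[R]_m) (x : 'cV[R]_n) :
  is_norm Nm -> is_norm Nn -> (exists i j : 'I_n, i != j) -> 0 < Lf -> 0 <= muf ->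
  smooth_on Nm f (convhullA A) Lf -> strongly_convex_on Nm f (convhullA A) muf ->
  convhullA A u -> simplex x -> ~ Zset A u x ->
  2 * bregman f u (A *m x) / distZ Nn A x u ^+ 2 <= Lf * ratio_max Nm Nn A /\
  muf * facial_dist Nm A ^+ 2 / (4 * max_basis_sq Nn) <=
    2 * bregman f u (A *m x) / distZ Nn A x u ^+ 2.
Proof.
move=> hNm hNn hij Lf0 mu0 hsm hsc Cu sx nZ.
have n0 : (0 < n)%N by case: hij => i _; apply: leq_ltn_trans (ltn_ord i).
have [rho0 hrho] := rho_props A hNm hNn hij.
have [mb0 hmb] := basis_bound hNn n0.
have [z [Zz dE d0 zmin]] := distZ_min hNm hNn Cu sx nZ.
have CAx : convhullA A (A *m x) by exists x.
set b := bregman f u (A *m x).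
set N := Nm (A *m x - u).
have bU : 2 * b <= Lf * N ^+ 2.
  have := hsm u (A *m x) Cu CAx; rewrite /b /bregman -/N => h.
  have -> : Lf * N ^+ 2 = 2 * (Lf / 2 * N ^+ 2) by field.
  lra.
have bL : muf * N ^+ 2 <= 2 * b.
  have := hsc u (A *m x) Cu CAx; rewrite /b /bregman -/N => h.
  have -> : muf * N ^+ 2 = 2 * (muf / 2 * N ^+ 2) by field.
  lra.
rewrite dE.
set d := Nn (x - z) in d0 zmin *.
have d20 : 0 < d ^+ 2 by rewrite exprn_gt0.
have Axu : N = Nm (A *m (x - z)) by rewrite /N mulmxBr Zz.2.
split.
- have xz0 : x - z != 0.
    by apply/eqP => h; move: d0; rewrite /d h (nrm0 hNn) ltxx.
  have sxz : \sum_i (x - z) i 0 = 0.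
    rewrite (eq_bigr (fun i => x i 0 - z i 0)); last by move=> i _; rewrite !mxE.
    by rewrite sumrB sx.2 Zz.1.2 subrr.
  have hr := hrho _ xz0 sxz; rewrite -Axu -/d in hr.
  rewrite ler_pdivrMr //; apply: le_trans bU _.
  by rewrite -mulrA; apply: ler_wpM2l => //; exact: ltW.
have [z1 [Zz1 z1min]] := Z_ming hNm Cu (lip_l1 x).
have Phi0 := facial_dist_ge0 A hNm.
set P := facial_dist Nm A.
set L := l1 (x - z1).
have key : P * L <= 2 * N.
  case: (key_face hNm sx Zz1 z1min) => [h0|[G [fG nG pG hG]]].
    by rewrite /L h0 mulr0 mulr_ge0 ?nrm_ge0.
  apply: le_trans hG; apply: ler_wpM2r; first exact: l1_ge0.
  exact: facial_le.
have h2 : d ^+ 2 <= max_basis_sq Nn * L ^+ 2.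
  apply: le_trans (hmb _); apply: sq_le; [exact: ltW | exact: zmin].
have h3 : (P * L) ^+ 2 <= (2 * N) ^+ 2.
  by apply: sq_le => //; apply: mulr_ge0 => //; exact: l1_ge0.
have main : muf * P ^+ 2 * d ^+ 2 <= 2 * b * (4 * max_basis_sq Nn).
  apply: le_trans (_ : muf * P ^+ 2 * (max_basis_sq Nn * L ^+ 2) <= _).
    by apply: ler_wpM2l => //; apply: mulr_ge0 => //; exact: exprn_ge0.
  have -> : muf * P ^+ 2 * (max_basis_sq Nn * L ^+ 2) =
     (muf * max_basis_sq Nn) * (P * L) ^+ 2 by ring.
  apply: le_trans (_ : muf * max_basis_sq Nn * (2 * N) ^+ 2 <= _).
    by apply: ler_wpM2l => //; apply: mulr_ge0 => //; exact: ltW.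
  have -> : muf * max_basis_sq Nn * (2 * N) ^+ 2 = (4 * max_basis_sq Nn) * (muf * N ^+ 2) by ring.
  rewrite [2 * b * _]mulrC; apply: ler_wpM2l => //.
  by apply: mulr_ge0 => //; exact: ltW.
have m40 : 0 < 4 * max_basis_sq Nn by rewrite mulr_gt0.
rewrite ler_pdivlMr // mulrAC ler_pdivrMr //.
Qed.


Unset Implicit Arguments.

Theorem corollary3 (R : realType) (m n : nat)
  (Nm : 'cV[R]_m -> R) (Nn : 'cV[R]_n -> R) (A : 'M[R]_(m, n))
  (f : 'cV[R]_m -> R) (D : set 'cV[R]_m) (Lf muf : R) :
  is_norm Nm -> is_norm Nn ->
  (exists i j : 'I_n, matrix.col i A != matrix.col j A) ->
  open D -> cvx_set D -> cvx_on D f -> (forall u, D u -> differentiable f u) ->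
  convhullA A `<=` D ->
  0 < Lf -> 0 <= muf ->
  smooth_on Nm f (convhullA A) Lf -> strongly_convex_on Nm f (convhullA A) muf ->
  [/\ (LfA Nn f A <= (Lf * ratio_max Nm Nn A)%:E)%E,
      ((muf * facial_dist Nm A ^+ 2 / (4 * max_basis_sq Nn))%:E <= muFA Nn f A)%E &
      (0 < muf ->
        fine (LfA Nn f A) / fine (muFA Nn f A) <=
        Lf / muf * (4 * max_basis_sq Nn / facial_dist Nm A ^+ 2) * ratio_max Nm Nn A)].
Proof.
move=> hNm hNn [i [j cij]] _ _ _ _ _ Lf0 mu0 hsm hsc.
have ij : i != j by apply: contra cij => /eqP ->.
have hij : exists i j : 'I_n, i != j by exists i, j.
have n0 : (0 < n)%N by apply: leq_ltn_trans (ltn_ord i).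
have c1 : (LfA Nn f A <= (Lf * ratio_max Nm Nn A)%:E)%E.
  apply: ge_ereal_sup => _ [u [x [Cu sx nZ ->]]]; rewrite lee_fin.
  exact: (elem_bounds hNm hNn hij Lf0 mu0 hsm hsc Cu sx nZ).1.
have c2 : ((muf * facial_dist Nm A ^+ 2 / (4 * max_basis_sq Nn))%:E <= muFA Nn f A)%E.
  apply: le_ereal_inf_tmp => _ [u [x [Cu sx nZ ->]]]; rewrite lee_fin.
  exact: (elem_bounds hNm hNn hij Lf0 mu0 hsm hsc Cu sx nZ).2.
split => // mu_pos.
pose u0 := matrix.col i A.
pose x0 : 'cV[R]_n := delta_mx j 0.
have Cu0 : convhullA A u0 by exact: col_in_C.
have sx0 : simplex x0 by exact: simplex_delta.
have nZ0 : ~ Zset A u0 x0.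
  by move=> [_ h]; move: cij; rewrite -/u0 -h /x0 -colE eqxx.
pose r0 := 2 * bregman f u0 (A *m x0) / distZ Nn A x0 u0 ^+ 2.
have Sr0 : [set r | exists u x, [/\ convhullA A u, simplex x, ~ Zset A u x &
     r = (2 * bregman f u (A *m x) / distZ Nn A x u ^+ 2)%:E]] r0%:E.
  by exists u0, x0.
have lb1 : (r0%:E <= LfA Nn f A)%E by apply: ereal_sup_ubound.
have ub2 : (muFA Nn f A <= r0%:E)%E by apply: ereal_inf_lbound.
have Phi0 : 0 < facial_dist Nm A.
  apply: Phi_pos => //.
  have [z1 [Zz1 z1min]] := Z_ming hNm Cu0 (lip_l1 x0).
  case: (key_face hNm sx0 Zz1 z1min) => [h0|[G [fG nG pG _]]]; last by exists G.
  exfalso; apply: nZ0; have := l1_eq0 h0; move/eqP; rewrite subr_eq0 => /eqP ->.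
  exact: Zz1.
have [mb0 _] := basis_bound hNn n0.
set P := facial_dist Nm A in Phi0 c2 *.
set mb := max_basis_sq Nn in mb0 c2 *.
set rho := ratio_max Nm Nn A in c1 *.
set kap := muf * P ^+ 2 / (4 * mb) in c2.
have kap0 : 0 < kap by rewrite /kap divr_gt0 ?mulr_gt0 ?exprn_gt0.
have rho0 : 0 <= rho by have [] := rho_props A hNm hNn hij.
move: c1 lb1; case: (LfA Nn f A) => [l| |] //= c1 lb1.
move: c2 ub2; case: (muFA Nn f A) => [mu'| |] //= c2 ub2.
rewrite lee_fin in c1; rewrite lee_fin in c2.
have mu'0 : 0 < mu' by apply: lt_le_trans c2.
have -> : Lf / muf * (4 * mb / P ^+ 2) * rho = (Lf * rho) / kap.
  by rewrite /kap; field; rewrite !gt_eqF ?exprn_gt0 //.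
apply: le_trans (_ : Lf * rho / mu' <= _).
  by rewrite ler_pM2r ?invr_gt0.
apply: ler_wpM2l; first by apply: mulr_ge0 => //; exact: ltW.
by rewrite lef_pV2 ?posrE.
Qed.
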